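(* Let $\{\lambda_{-n}\}_{n\in\mathbb{J}}$ be a family of Witt vectors $\lambda_{-n}=(\lambda_{-n,0},\lambda_{-n,1},\dots)\in\mathbf{W}(\mathcal{O}_K)$, and let $(\phi_{-n,0},\phi_{-n,1},\dots)$ be the phantom vector of $\lambda_{-n}$. The formal series $$g^-(T):=\sum_{n\in\mathbb{J}}\sum_{m\ge0}-n\,\phi_{-n,m}\,T^{-np^m}$$ belongs to $\mathcal{E}_K$ if and only if $|\lambda_{-n,m}|<1$ for all $n\in\mathbb{J}$ and all $m\ge0$, and $\lim_{n\in\mathbb{J},\,n\to\infty}\lambda_{-n,m}=0$ for all $m\ge0$.
   Context: $K$ is a field of characteristic $0$, complete for a non-archimedean absolute value, residue field of characteristic $p>0$; $\mathcal{O}_K=\{|x|\le1\}$. $\mathcal{E}_K$ is the ring of Laurent series $\sum_{i\in\mathbb{Z}}a_iT^i$ over $K$ with $\sup|a_i|<\infty$ and $|a_i|\to0$ as $i\to-\infty$. $\mathbb{J}=\{n\in\mathbb{Z}:n\ge1,\ p\nmid n\}$. $\mathbf{W}(\mathcal{O}_K)$ is the ring of $p$-typical Witt vectors with entries in $\mathcal{O}_K$; the phantom vector of $\lambda=(\lambda_0,\lambda_1,\dots)$ is $(\phi_0,\phi_1,\ldots)$, $\phi_m=\sum_{i=0}^mp^i\lambda_i^{p^{m-i}}$. *)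

(* Defs.v *)
From HB Require Import structures.
From mathcomp Require Import all_boot all_order all_algebra.
From mathcomp Require Import reals.
Set Implicit Arguments. Unset Strict Implicit. Unset Printing Implicit Defensive.
Import Order.TTheory GRing.Theory Num.Theory.
Local Open Scope ring_scope.

Definition nonarch_abs (K : fieldType) (R : realType) (abs : K -> R) : Prop :=
  (forall x, 0 <= abs x) /\
  (forall x, abs x = 0 <-> x = 0) /\
  (forall x y, abs (x * y) = abs x * abs y) /\
  (forall x y, abs (x + y) <= Num.max (abs x) (abs y)).

Definition abs_complete (K : fieldType) (R : realType) (abs : K -> R) : Prop :=
  forall u : nat -> K,
    (forall eps : R, 0 < eps -> exists N : nat, forall i j : nat,
        (N <= i)%N -> (N <= j)%N -> abs (u i - u j) < eps) ->
    exists l : K, forall eps : R, 0 < eps -> exists N : nat, forall i : nat,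
        (N <= i)%N -> abs (u i - l) < eps.

Definition inJ (p n : nat) : bool := (0 < n)%N && ~~ (p %| n)%N.

Definition phantom (K : fieldType) (p : nat) (lam : nat -> K) (m : nat) : K :=
  \sum_(i < m.+1) (p ^ i)%:R * lam i ^+ (p ^ (m - i)).

(* Coefficient of T^(-k) (k : nat) in
   g^-(T) = sum_{n in J} sum_{m >= 0} -n phi_{-n,m} T^(-n p^m);
   lam n is the Witt vector lambda_{-n}. *)
Definition gminus_negcoef (K : fieldType) (p : nat) (lam : nat -> nat -> K)
    (k : nat) : K :=
  \sum_(0 <= n < k.+1 | inJ p n)
    \sum_(0 <= m < k.+1 | (n * p ^ m == k)%N)
      (- (n%:R * phantom p (lam n) m)).

Definition gminus (K : fieldType) (p : nat) (lam : nat -> nat -> K) (i : int) : K :=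
  if (i < 0)%R then gminus_negcoef p lam `|i|%N else 0.

Definition in_EK (K : fieldType) (R : realType) (abs : K -> R) (a : int -> K) : Prop :=
  (exists B : R, forall i : int, abs (a i) <= B) /\
  (forall eps : R, 0 < eps -> exists N : int, forall i : int,
      (i <= N)%R -> abs (a i) < eps).

(* Main.v *)
Require Import Defs.
From HB Require Import structures.
From mathcomp Require Import all_boot all_order all_algebra.
From mathcomp Require Import reals.
From mathcomp Require Import ring lra zify.
Set Implicit Arguments. Unset Strict Implicit.
Import Order.TTheory GRing.Theory Num.Theory.
Local Open Scope ring_scope.

Lemma abs0 (R : realType) (K : fieldType) (abs : K -> R) :
  nonarch_abs abs -> abs 0 = 0.
Proof. by case=> _ [h _]; apply/h. Qed.

Lemma abs1 (R : realType) (K : fieldType) (abs : K -> R) :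
  nonarch_abs abs -> abs 1 = 1.
Proof.
case=> h0 [h1 [hM _]].
have e := hM 1 1; rewrite mulr1 in e.
have nz : abs 1 != 0 by apply/eqP => /h1/eqP; rewrite oner_eq0.
by apply: (mulfI nz); rewrite mulr1 -e.
Qed.

Lemma absN (R : realType) (K : fieldType) (abs : K -> R) x :
  nonarch_abs abs -> abs (- x) = abs x.
Proof.
move=> h; have [h0 [h1 [hM _]]] := h.
have e : abs (-1) = 1.
  have := hM (-1) (-1); rewrite mulrNN mulr1 (abs1 h) => e.
  have := h0 (-1); move: e; set t := abs (-1) => e t0.
  have : (t - 1) * (t + 1) = 0 by rewrite mulrDr mulrBl -e; ring.
  move/eqP; rewrite mulf_eq0 => /orP[|]; first by rewrite subr_eq0 => /eqP.
  move=> /eqP; lra.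
by rewrite -mulN1r hM e mul1r.
Qed.

Lemma absX (R : realType) (K : fieldType) (abs : K -> R) x k :
  nonarch_abs abs -> abs (x ^+ k) = abs x ^+ k.
Proof.
move=> h; have [h0 [h1 [hM _]]] := h.
elim: k => [|k IH]; first by rewrite !expr0 (abs1 h).
by rewrite !exprS hM IH.
Qed.

Lemma absD_le (R : realType) (K : fieldType) (abs : K -> R) x y b :
  nonarch_abs abs -> abs x <= b -> abs y <= b -> abs (x + y) <= b.
Proof.
case=> _ [_ [_ hD]] hx hy; apply: le_trans (hD x y) _.
by rewrite ge_max hx hy.
Qed.

Lemma absD_lt (R : realType) (K : fieldType) (abs : K -> R) x y b :
  nonarch_abs abs -> abs x < b -> abs y < b -> abs (x + y) < b.
Proof.
case=> _ [_ [_ hD]] hx hy; apply: le_lt_trans (hD x y) _.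
by rewrite gt_max hx hy.
Qed.

Lemma abs_sum_lt (R : realType) (K : fieldType) (abs : K -> R) (I : Type)
  (s : seq I) (P : pred I) (F : I -> K) b :
  nonarch_abs abs -> 0 < b -> (forall i, P i -> abs (F i) < b) ->
  abs (\sum_(i <- s | P i) F i) < b.
Proof.
move=> h b0 hF; elim: s => [|x s IH]; first by rewrite big_nil (abs0 h).
rewrite big_cons; case: ifP => // Px; exact: absD_lt h (hF _ Px) IH.
Qed.

Lemma abs_sum_le (R : realType) (K : fieldType) (abs : K -> R) (I : Type)
  (s : seq I) (P : pred I) (F : I -> K) b :
  nonarch_abs abs -> 0 <= b -> (forall i, P i -> abs (F i) <= b) ->
  abs (\sum_(i <- s | P i) F i) <= b.
Proof.
move=> h b0 hF; elim: s => [|x s IH]; first by rewrite big_nil (abs0 h).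
rewrite big_cons; case: ifP => // Px; exact: absD_le h (hF _ Px) IH.
Qed.

Lemma abs_nat_le1 (R : realType) (K : fieldType) (abs : K -> R) n :
  nonarch_abs abs -> abs n%:R <= 1.
Proof.
move=> h; elim: n => [|n IH]; first by rewrite (abs0 h).
by rewrite -natr1; apply: (absD_le h IH); rewrite (abs1 h).
Qed.

Lemma abs_ge_sub (R : realType) (K : fieldType) (abs : K -> R) x y :
  nonarch_abs abs -> abs y < abs x -> abs x <= abs (x + y).
Proof.
move=> h hy; have [_ [_ [_ hD]]] := h.
have := hD (x + y) (- y); rewrite addrK (absN _ h) => e.
move: e; rewrite le_max => /orP[//|]; rewrite leNgt hy //.
Qed.

Lemma abs_nat_unit (R : realType) (K : fieldType) (abs : K -> R) p n :
  nonarch_abs abs -> prime p -> abs p%:R < 1 -> (0 < n)%N -> ~~ (p %| n)%N ->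
  abs n%:R = 1.
Proof.
move=> h pp hp n0 ndvd.
have cop : coprime n p by rewrite coprime_sym prime_coprime.
case: (egcdnP p n0) => km kn e _.
move: e; rewrite (eqP cop) => e.
have eK : (km%:R * n%:R : K) = kn%:R * p%:R + 1 by rewrite -!natrM e natrD.
apply/le_anti; rewrite abs_nat_le1 //=; rewrite leNgt; apply/negP => hn.
have : abs (1 : K) < 1.
  have -> : (1 : K) = km%:R * n%:R + - (kn%:R * p%:R) by rewrite eK; ring.
  have [_ [_ [hM _]]] := h.
  apply: absD_lt => //; rewrite ?absN // hM.
    by apply: (le_lt_trans _ hn); rewrite ler_piMl ?abs_nat_le1 //; case: h.
  by apply: (le_lt_trans _ hp); rewrite ler_piMl ?abs_nat_le1 //; case: h.
by rewrite (abs1 h) ltxx.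
Qed.

Lemma pow_small (R : realType) (c eps : R) :
  0 <= c -> c < 1 -> 0 < eps -> exists J : nat, c ^+ J < eps.
Proof.
move=> c0 c1 e0.
have [->|cn0] := eqVneq c 0; first by exists 1%N; rewrite expr1.
have cp : 0 < c by rewrite lt_neqAle eq_sym cn0.
set t := c^-1 - 1.
have tp : 0 < t by rewrite /t subr_gt0 invf_gt1.
have bern : forall J : nat, 1 + J%:R * t <= (c^-1) ^+ J.
  elim=> [|J IH]; first by rewrite expr0 mul0r addr0.
  rewrite exprS -natr1 mulrDl mul1r.
  have ci : c^-1 = 1 + t by rewrite /t; ring.
  rewrite ci in IH *.
  have h2 : 0 <= t by rewrite ltW.
  have h1 : 0 <= J%:R * t * t by apply: mulr_ge0 => //; apply: mulr_ge0.
  set P := (1 + t) ^+ J in IH *.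
  have h3 : (1 + t) * (1 + J%:R * t) <= (1 + t) * P by rewrite ler_wpM2l // addr_ge0.
  nra.
set x := (eps * t)^-1.
have x0 : 0 <= x by rewrite /x invr_ge0 mulr_ge0 ?ltW.
exists (Num.bound x); have hb := archi_boundP x0.
set B := (Num.bound x)%:R in hb *.
have := bern (Num.bound x); rewrite -/B exprVn => hB.
have Bp : 0 < c ^+ Num.bound x by rewrite exprn_gt0.
have : eps^-1 < B * t.
  by rewrite -ltr_pdivrMr // -invfM; rewrite /x in hb.
move=> h2.
have : eps^-1 < (c ^+ Num.bound x)^-1 by apply: (lt_le_trans h2); lra.
by rewrite ltf_pV2 ?posrE.
Qed.

Lemma phantom0 (K : fieldType) (p : nat) (mu : nat -> K) : Defs.phantom p mu 0 = mu 0%N.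
Proof. by rewrite /Defs.phantom big_ord1 /= expn0 mul1r expr1. Qed.

Lemma phantomS (K : fieldType) (p : nat) (mu : nat -> K) M :
  Defs.phantom p mu M.+1 = mu 0%N ^+ (p ^ M.+1) + p%:R * Defs.phantom p (fun i => mu i.+1) M.
Proof.
rewrite /Defs.phantom big_ord_recl /= expn0 mul1r subn0; congr (_ + _).
rewrite mulr_sumr; apply: eq_bigr => i _ /=.
by rewrite /bump /= add1n subSS expnS natrM mulrA.
Qed.

Lemma phantom_recr (K : fieldType) (p : nat) (mu : nat -> K) m :
  Defs.phantom p mu m = \sum_(i < m) (p ^ i)%:R * mu i ^+ (p ^ (m - i)) + (p ^ m)%:R * mu m.
Proof. by rewrite /Defs.phantom big_ord_recr /= subnn expn0 expr1. Qed.

Lemma abs_term (R : realType) (K : fieldType) (abs : K -> R) (p : nat) i k (x : K) :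
  nonarch_abs abs ->
  abs ((p ^ i)%:R * x ^+ k) = abs p%:R ^+ i * abs x ^+ k.
Proof. by move=> h; have [_ [_ [hM _]]] := h; rewrite hM natrX !(absX _ _ h). Qed.

Lemma abs_term_le (R : realType) (K : fieldType) (abs : K -> R) (p : nat) i k (x : K) :
  nonarch_abs abs -> abs x <= 1 -> (0 < k)%N ->
  abs ((p ^ i)%:R * x ^+ k) <= abs p%:R ^+ i /\ abs ((p ^ i)%:R * x ^+ k) <= abs x.
Proof.
move=> h hx k0; have [h0 _] := h; rewrite abs_term //.
have hp1 := abs_nat_le1 p h.
split.
  by rewrite ler_piMr ?exprn_ge0 ?exprn_ile1.
apply: (le_trans (y := abs x ^+ k)).
  by rewrite ler_piMl ?exprn_ge0 ?exprn_ile1.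
by rewrite -{2}(expr1 (abs x)) ler_wiXn2l.
Qed.

Lemma abs_phantom_le1 (R : realType) (K : fieldType) (abs : K -> R) (p : nat) (mu : nat -> K) M :
  nonarch_abs abs -> (0 < p)%N -> (forall i, abs (mu i) <= 1) -> abs (Defs.phantom p mu M) <= 1.
Proof.
move=> h p0 hm; rewrite /Defs.phantom; apply: abs_sum_le => // i _.
have k0 : (0 < p ^ (M - i))%N by rewrite expn_gt0 p0.
have [_ hh] := abs_term_le p i (x := mu i) h (hm i) k0.
exact: le_trans hh (hm i).
Qed.

Definition decay (R : realType) (K : fieldType) (abs : K -> R) (f : nat -> K) :=
  forall eps : R, 0 < eps -> exists M0 : nat, forall M, (M0 <= M)%N -> abs (f M) < eps.

Lemma L0 (R : realType) (K : fieldType) (abs : K -> R) (p : nat) (mu : nat -> K) :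
  nonarch_abs abs -> (1 < p)%N -> abs p%:R < 1 ->
  (forall i, abs (mu i) <= 1) -> decay abs (Defs.phantom p mu) -> abs (mu 0%N) < 1.
Proof.
move=> h p1 ha hb hd; have [h0 [_ [hM _]]] := h.
rewrite ltNge; apply/negP => h1.
have e1 : abs (mu 0%N) = 1 by apply/le_anti; rewrite h1 hb.
have [M0 hM0] := hd 1 ltr01.
have := hM0 M0.+1 (leqnSn _); rewrite phantomS.
have hy : abs (p%:R * Defs.phantom p (fun i => mu i.+1) M0) < abs (mu 0%N ^+ (p ^ M0.+1)).
  rewrite (absX _ _ h) e1 expr1n hM; apply: le_lt_trans ha.
  rewrite ler_piMr //; apply: abs_phantom_le1 => //; exact: ltnW.
have := abs_ge_sub h hy; rewrite (absX _ _ h) e1 expr1n => hh hl.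
by have := le_lt_trans hh hl; rewrite ltxx.
Qed.

Lemma L1 (R : realType) (K : fieldType) (abs : K -> R) (p : nat) j :
  nonarch_abs abs -> (1 < p)%N -> 0 < abs p%:R -> abs p%:R < 1 ->
  forall mu : nat -> K,
  (forall i, abs (mu i) <= 1) -> decay abs (Defs.phantom p mu) -> abs (mu j) < 1.
Proof.
move=> h p1 ha0 ha; have [h0 [_ [hM _]]] := h.
elim: j => [|j IH] mu hb hd; first exact: (L0 h p1 ha hb hd).
apply: (IH (fun i => mu i.+1)) => // eps e0.
set e' := eps * abs p%:R.
have e'0 : 0 < e' by rewrite mulr_gt0.
have [M1 hM1] := hd e' e'0.
have [J hJ] := pow_small (h0 (mu 0%N)) (L0 h p1 ha hb hd) e'0.
exists (maxn M1 J) => M; rewrite geq_max => /andP[hM1M hJM].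
have hphi := hM1 M.+1 (leqW hM1M); rewrite phantomS in hphi.
have hx : abs (mu 0%N ^+ (p ^ M.+1)) < e'.
  rewrite (absX _ _ h); apply: le_lt_trans hJ.
  apply: (ler_wiXn2l (h0 _) (hb 0%N)).
  by have := ltn_expl M.+1 p1; lia.
have : abs (p%:R * Defs.phantom p (fun i => mu i.+1) M) < e'.
  set y := (p%:R * _).
  have -> : y = (mu 0%N ^+ (p ^ M.+1) + y) + - mu 0%N ^+ (p ^ M.+1) by ring.
  by apply: absD_lt => //; rewrite (absN _ h).
by rewrite hM /e' mulrC ltr_pM2r.
Qed.

Lemma decomp_unique (p n m n' m' : nat) : prime p -> inJ p n -> inJ p n' ->
  (n' * p ^ m' = n * p ^ m)%N -> n' = n /\ m' = m.
Proof.
move=> pp /andP[n0 hn] /andP[n'0 hn'] e.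
have lg : forall a b, (0 < a)%N -> ~~ (p %| a)%N -> logn p (a * p ^ b) = b.
  move=> a b a0 ha.
  have pb : (0 < p ^ b)%N by rewrite expn_gt0 prime_gt0.
  rewrite (lognM p a0 pb) (pfactorK b pp).
  by rewrite logn_coprime ?prime_coprime.
have em : m' = m by rewrite -(lg n' m') // e lg.
split => //; move: e; rewrite em => /eqP; rewrite eqn_pmul2r ?expn_gt0 ?prime_gt0 //.
by move/eqP.
Qed.

Lemma sum_only (K : fieldType) (s : seq nat) (P : pred nat) (F : nat -> K) x :
  uniq s -> x \in s -> P x -> (forall y, P y -> y != x -> F y = 0) ->
  \sum_(i <- s | P i) F i = F x.
Proof.
move=> us xs Px hF; rewrite -big_filter (bigD1_seq x) ?mem_filter ?Px ?filter_uniq //=.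
rewrite big1_seq ?addr0 // => y /andP[yx]; rewrite mem_filter => /andP[Py _].
exact: hF.
Qed.

Lemma coef_eq (K : fieldType) (p : nat) (lam : nat -> nat -> K) n m :
  prime p -> inJ p n ->
  gminus_negcoef p lam (n * p ^ m) = - (n%:R * Defs.phantom p (lam n) m).
Proof.
move=> pp hn; have /andP[n0 _] := hn.
have pm0 : (0 < p ^ m)%N by rewrite expn_gt0 prime_gt0.
have mn : (m < n * p ^ m)%N.
  have := ltn_expl m (prime_gt1 pp); have := leq_pmull (p ^ m) n0. lia.
have h1 : n \in index_iota 0 (n * p ^ m).+1.
  by rewrite mem_index_iota; apply/andP; split => //; rewrite ltnS leq_pmulr.
have h2 : m \in index_iota 0 (n * p ^ m).+1.
  by rewrite mem_index_iota /= ltnS ltnW.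
rewrite /gminus_negcoef (sum_only (iota_uniq _ _) h1 hn).
  rewrite (@sum_only _ _ (fun m2 => (n * p ^ m2 == n * p ^ m)%N) _ m (iota_uniq _ _) h2 (eqxx _)) //.
  move=> y /eqP e ym; have [_ e2] := decomp_unique pp hn hn e.
  by rewrite e2 eqxx in ym.
move=> y hy yn; apply: big1 => m' /eqP e.
by have [e1 _] := decomp_unique pp hn hy e; rewrite e1 eqxx in yn.
Qed.

Lemma gminus_neg (K : fieldType) (p : nat) (lam : nat -> nat -> K) (k : nat) :
  (0 < k)%N -> gminus p lam (- (k%:Z)) = gminus_negcoef p lam k.
Proof.
move=> k0; rewrite /gminus oppr_lt0 ltz_nat k0 abszN absz_nat //.
Qed.

Definition Pc (R : realType) (K : fieldType) (abs : K -> R) (p : nat) (lam : nat -> nat -> K) :=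
  forall eps : R, 0 < eps -> exists K0 : nat, forall n m : nat, inJ p n ->
    (K0 <= n * p ^ m)%N -> abs (Defs.phantom p (lam n) m) < eps.

Lemma EK_iff (R : realType) (K : fieldType) (abs : K -> R) (p : nat) (lam : nat -> nat -> K) :
  nonarch_abs abs -> prime p -> abs p%:R < 1 ->
  (forall n m : nat, inJ p n -> abs (lam n m) <= 1) ->
  in_EK abs (gminus p lam) <-> Pc abs p lam.
Proof.
move=> h pp ha hlam; have [h0 [_ [hM _]]] := h.
have absn : forall n, inJ p n -> abs (n%:R : K) = 1.
  by move=> n /andP[n0 hn]; apply: (abs_nat_unit h pp ha n0 hn).
have p0 : (0 < p)%N by apply: prime_gt0.
split.
  move=> [_ hdec] eps e0; have [N hN] := hdec eps e0.
  exists (absz N) => n m hn hk.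
  have /andP[n0 _] := hn.
  have k0 : (0 < n * p ^ m)%N by rewrite muln_gt0 n0 expn_gt0 p0.
  have := hN (- ((n * p ^ m)%N%:Z)) _.
  rewrite gminus_neg // coef_eq // (absN _ h) hM absn // mul1r; apply.
  lia.
move=> hP; split.
  exists 1 => i; rewrite /gminus; case: ifP => _; last by rewrite (abs0 h) ler01.
  apply: abs_sum_le => // n hn; apply: abs_sum_le => // m _.
  rewrite (absN _ h) hM absn // mul1r; apply: abs_phantom_le1 => // j.
  exact: hlam.
move=> eps e0; have [K0 hK0] := hP eps e0.
exists (- (K0%:Z) - 1) => i hi.
have -> : i = - ((absz i)%N%:Z) by lia.
rewrite gminus_neg; last by lia.
apply: abs_sum_lt => // n hn; apply: abs_sum_lt => // m /eqP hm.
rewrite (absN _ h) hM absn // mul1r; apply: hK0 => //.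
rewrite hm; lia.
Qed.

Lemma fin_ev (Q : nat -> nat -> Prop) m :
  (forall i, (i < m)%N -> exists N, forall n, (N <= n)%N -> Q i n) ->
  exists N, forall i n, (i < m)%N -> (N <= n)%N -> Q i n.
Proof.
elim: m => [|m IH] H; first by exists 0%N.
have [N1 h1] := IH (fun i hi => H i (ltnW hi)).
have [N2 h2] := H m (ltnSn m).
exists (maxn N1 N2) => i n; rewrite ltnS leq_eqVlt geq_max => /orP[/eqP ->|hi] /andP[a b].
  exact: h2.
exact: h1.
Qed.

Lemma Pc_C1 (R : realType) (K : fieldType) (abs : K -> R) (p : nat) (lam : nat -> nat -> K) :
  nonarch_abs abs -> prime p -> 0 < abs p%:R -> abs p%:R < 1 ->
  (forall n m : nat, inJ p n -> abs (lam n m) <= 1) ->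
  Pc abs p lam -> forall n m, inJ p n -> abs (lam n m) < 1.
Proof.
move=> h pp ha0 ha hlam hP n m hn.
apply: (L1 m h (prime_gt1 pp) ha0 ha (mu := lam n)) => [i|eps e0]; first exact: hlam.
have [K0 hK0] := hP eps e0; exists K0 => M hM; apply: hK0 => //.
have /andP[n0 _] := hn.
have := ltn_expl M (prime_gt1 pp); have := leq_pmull (p ^ M) n0. lia.
Qed.

Lemma Pc_C2 (R : realType) (K : fieldType) (abs : K -> R) (p : nat) (lam : nat -> nat -> K) :
  nonarch_abs abs -> prime p -> 0 < abs p%:R -> abs p%:R < 1 ->
  (forall n m : nat, inJ p n -> abs (lam n m) <= 1) ->
  Pc abs p lam -> forall m (eps : R), 0 < eps -> exists N : nat, forall n, inJ p n ->
    (N <= n)%N -> forall i, (i < m)%N -> abs (lam n i) < eps.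
Proof.
move=> h pp ha0 ha hlam hP; have [h0 [_ [hM _]]] := h.
have p0 : (0 < p)%N by apply: prime_gt0.
elim=> [|m IH] eps e0; first by exists 0%N.
set e' := eps * abs p%:R ^+ m.
have e'0 : 0 < e' by rewrite mulr_gt0 // exprn_gt0.
have ap1 : abs p%:R ^+ m <= 1 := exprn_ile1 m (ltW ha0) (ltW ha).
have e'le : e' <= eps by rewrite ler_piMr // ltW.
have [N1 hN1] := IH e' e'0.
have [K0 hK0] := hP e' e'0.
exists (maxn N1 K0) => n hn; rewrite geq_max => /andP[hn1 hk0] i.
rewrite ltnS leq_eqVlt => /orP[/eqP ->|hi]; last first.
  exact: lt_le_trans (hN1 n hn hn1 i hi) e'le.
have /andP[n0 _] := hn.
have hphi : abs (Defs.phantom p (lam n) m) < e'.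
  apply: hK0 => //; apply: leq_trans hk0 _; apply: leq_pmulr; by rewrite expn_gt0 p0.
rewrite phantom_recr in hphi.
set S := (\sum_(i < m) _) in hphi.
have hS : abs S < e'.
  apply: abs_sum_lt => // j _.
  have k0 : (0 < p ^ (m - j))%N by rewrite expn_gt0 p0.
  have [_ hh] := abs_term_le p j (x := lam n j) h (hlam _ _ hn) k0.
  exact: le_lt_trans hh (hN1 n hn hn1 j (ltn_ord j)).
have : abs ((p ^ m)%:R * lam n m) < e'.
  set y := (_ * lam n m) in hphi *.
  have -> : y = (S + y) + - S by ring.
  by apply: absD_lt => //; rewrite (absN _ h).
by rewrite hM natrX (absX _ _ h) /e' mulrC ltr_pM2r // exprn_gt0.
Qed.

Lemma C_Pc (R : realType) (K : fieldType) (abs : K -> R) (p : nat) (lam : nat -> nat -> K) :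
  nonarch_abs abs -> prime p -> 0 < abs p%:R -> abs p%:R < 1 ->
  (forall n m : nat, inJ p n -> abs (lam n m) <= 1) ->
  (forall n m : nat, inJ p n -> abs (lam n m) < 1) ->
  (forall m : nat, forall eps : R, 0 < eps -> exists N : nat,
       forall n : nat, inJ p n -> (N <= n)%N -> abs (lam n m) < eps) ->
  Pc abs p lam.
Proof.
move=> h pp ha0 ha hlam C1 C2; have [h0 [_ [hM _]]] := h.
have p0 : (0 < p)%N by apply: prime_gt0.
move=> eps e0.
have [I hI] := pow_small (ltW ha0) ha e0.
have hC2 : forall i, (i < I)%N -> exists N, forall n, (N <= n)%N ->
    inJ p n -> abs (lam n i) < eps.
  move=> i _; have [N hN] := C2 i eps e0; exists N => n hn hj; exact: hN.
have [N1 hN1] := fin_ev (Q := fun i n => inJ p n -> abs (lam n i) < eps) hC2.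
pose Q' := fun n m => forall i, (i < I)%N -> inJ p n ->
   abs (lam n i) ^+ (p ^ (m - i)) < eps.
have hQ : forall n, (n < N1)%N -> exists M, forall m, (M <= m)%N -> Q' n m.
  move=> n _.
  have hQi : forall i, (i < I)%N -> exists M, forall m, (M <= m)%N ->
      inJ p n -> abs (lam n i) ^+ (p ^ (m - i)) < eps.
    move=> i _; case hn: (inJ p n); last by exists 0%N.
    have [J hJ] := pow_small (h0 (lam n i)) (C1 n i hn) e0.
    exists (J + i)%N => m hm _; apply: le_lt_trans hJ.
    apply: (ler_wiXn2l (h0 _) (hlam _ _ hn)).
    have := ltn_expl (m - i) (prime_gt1 pp); lia.
  have [M hM'] := fin_ev (Q := fun i m => inJ p n -> abs (lam n i) ^+ (p ^ (m - i)) < eps) hQi.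
  by exists M => m hm i hi; apply: hM'.
have [M hM2] := fin_ev (Q := Q') (m := N1) hQ.
exists (N1 * p ^ M)%N => n m hn hk.
rewrite /Defs.phantom; apply: abs_sum_lt => // i _.
have k0 : (0 < p ^ (m - i))%N by rewrite expn_gt0 p0.
have [ht1 ht2] := abs_term_le p i (x := lam n i) h (hlam _ _ hn) k0.
have [iI|iI] := leqP I i.
  apply: le_lt_trans ht1 (le_lt_trans _ hI).
  exact: (ler_wiXn2l (ltW ha0) (ltW ha)).
have [nN|nN] := leqP N1 n.
  exact: le_lt_trans ht2 (hN1 i n iI nN hn).
have mM : (M <= m)%N.
  rewrite leqNgt; apply/negP => mM.
  have : (p ^ m <= p ^ M)%N by rewrite leq_exp2l ?prime_gt1 // ltnW.
  have : (0 < p ^ m)%N by rewrite expn_gt0 p0.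
  move: hk nN; set a := (p ^ m)%N; set b := (p ^ M)%N; nia.
rewrite abs_term //; apply: le_lt_trans (hM2 n m nN mM i iI hn).
rewrite ler_piMl ?exprn_ge0 //; apply: exprn_ile1; [exact: ltW|exact: ltW].
Qed.

Unset Implicit Arguments. Set Strict Implicit.

Theorem proposition2p2p3 (R : realType) (K : fieldType) (abs : K -> R) (p : nat)
  (habs : nonarch_abs abs) (hcomplete : abs_complete abs)
  (hchar0 : [pchar K] =i pred0)
  (hp : prime p) (hres : abs (p%:R) < 1)
  (lam : nat -> nat -> K)
  (hlam : forall n m : nat, inJ p n -> abs (lam n m) <= 1) :
  in_EK abs (gminus p lam) <->
  ((forall n m : nat, inJ p n -> abs (lam n m) < 1) /\
   (forall m : nat, forall eps : R, 0 < eps -> exists N : nat,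
       forall n : nat, inJ p n -> (N <= n)%N -> abs (lam n m) < eps)).
Proof.
have [h0 [h1 _]] := habs.
have pnz : (p%:R : K) != 0.
  have := hchar0 p; rewrite !inE hp /= => e.
  by apply/negP; rewrite e.
have ha0 : 0 < abs (p%:R : K).
  rewrite lt_neqAle h0 andbT eq_sym; apply/eqP => /h1 /eqP; exact/negP.
split.
  move/(EK_iff habs hp hres hlam) => hP; split.
    exact: (Pc_C1 habs hp ha0 hres hlam hP).
  move=> m eps e0; have [N hN] := Pc_C2 habs hp ha0 hres hlam hP m.+1 e0.
  by exists N => n hn hNn; exact: hN n hn hNn m (ltnSn m).
move=> [C1 C2]; apply/(EK_iff habs hp hres hlam).
exact: C_Pc habs hp ha0 hres hlam C1 C2.
Qed.
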